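(* Let $\sigma>\sqrt{2}/3$ and define $F(x)=-x^3-3\sigma^2x$ and $G(x)=\sqrt{15\sigma^6+36\sigma^4x^2+9\sigma^2x^4}$. Fix any timestep $\Delta t>0$ and let $$P(\xi\mid x)=\frac{1}{G(x)\sqrt{2\pi\Delta t}}\exp\!\left(\frac{-[\xi-x-F(x)\Delta t]^2}{2G(x)^2\Delta t}\right).$$ Then there is no probability density $\rho^*$ on $\mathbb{R}$ satisfying $\rho^*(\xi)=\int_{-\infty}^{\infty}P(\xi\mid x)\rho^*(x)\,dx$ for all $\xi$ and having finite second raw moment $\int_{-\infty}^{\infty}x^2\rho^*(x)\,dx<\infty$. That is, every such equilibrium density has divergent second moment.
   Context: The functions $F,G$ are the drift and diffusion coefficients of the Itô SDE $dx=(-x^3-3\sigma^2x)\,dt+\sqrt{15\sigma^6+36\sigma^4x^2+9\sigma^2x^4}\,dW$ with noise parameter $\sigma>0$. $P(\xi\mid x)$ is the one-step transition density of its Euler–Maruyama discretization $\xi=x+F(x)\Delta t+G(x)\eta\sqrt{\Delta t}$, $\eta\sim N(0,1)$; an equilibrium is a probability density invariant under this step. *)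

(* Defs.v *)
From HB Require Import structures.
From mathcomp Require Import all_boot all_order all_algebra.
From mathcomp Require Import all_classical all_reals all_analysis.
Set Implicit Arguments. Unset Strict Implicit. Unset Printing Implicit Defensive.
Import Order.TTheory GRing.Theory Num.Theory.
Local Open Scope ring_scope.

Definition driftF {R : realType} (sigma x : R) : R :=
  - x ^+ 3 - 3 * sigma ^+ 2 * x.

Definition diffG {R : realType} (sigma x : R) : R :=
  Num.sqrt (15 * sigma ^+ 6 + 36 * sigma ^+ 4 * x ^+ 2 + 9 * sigma ^+ 2 * x ^+ 4).

Definition transP {R : realType} (sigma dt xi x : R) : R :=
  (diffG sigma x * Num.sqrt (2 * pi * dt))^-1 *
  expR (- (xi - x - driftF sigma x * dt) ^+ 2 / (2 * diffG sigma x ^+ 2 * dt)).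

Definition is_prob_density {R : realType} (rho : R -> R) : Prop :=
  measurable_fun setT rho /\ (forall x, 0 <= rho x) /\
  (\int[lebesgue_measure]_x (rho x)%:E = 1)%E.

Definition is_equilibrium {R : realType} (sigma dt : R) (rho : R -> R) : Prop :=
  forall xi : R,
    ((rho xi)%:E = \int[lebesgue_measure]_x (transP sigma dt xi x * rho x)%:E)%E.

Definition finite_second_moment {R : realType} (rho : R -> R) : Prop :=
  (\int[lebesgue_measure]_x (x ^+ 2 * rho x)%:E < +oo)%E.

(* Main.v *)
Set Warnings "-all".
Require Import Defs.
From mathcomp Require Import all_boot all_order all_algebra.
From mathcomp Require Import all_classical all_reals all_analysis.
From mathcomp Require Import ring lra measurable_realfun.
Import numFieldNormedType.Exports.
Import Order.TTheory GRing.Theory Num.Theory.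
Local Open Scope ring_scope.

Section Aux.
Variable R : realType.
Notation mu := (@lebesgue_measure R).

Definition Cn (s : R) := Num.sqrt (s ^+ 2 * pi *+ 2).

Lemma Cn_gt0 (s : R) : s != 0 -> 0 < Cn s.
Proof.
move=> s0; rewrite /Cn sqrtr_gt0.
by rewrite mulrn_wgt0// mulr_gt0 ?pi_gt0// exprn_even_gt0/=.
Qed.

Lemma CnM (t s : R) : 0 <= t -> Cn (t * s) = t * Cn s.
Proof.
move=> t0; rewrite /Cn exprMn -mulrA -mulrnAr sqrtrM ?sqr_ge0//.
by rewrite sqrtr_sqr ger0_norm// mulrnAr.
Qed.

Lemma int_nf (a b : R) : b != 0 ->
  (\int[mu]_x (normal_fun a b x)%:E = (Cn b)%:E)%E.
Proof.
move=> b0.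
have := integral_normal_pdf a b.
rewrite /normal_pdf (negbTE b0).
under eq_integral do rewrite EFinM.
rewrite ge0_integralZl//=; last 3 first.
- by apply/measurable_EFinP; exact: measurable_normal_fun.
- by move=> x _; rewrite lee_fin normal_fun_ge0.
- by rewrite lee_fin normal_peak_ge0.
have : (0 <= \int[mu]_x (normal_fun a b x)%:E)%E.
  by apply: integral_ge0 => x _; rewrite lee_fin normal_fun_ge0.
case: (\int[mu]_x (normal_fun a b x)%:E)%E => [r| |]//= r0.
  move=> /eqP; rewrite -EFinM eqe => /eqP h; congr EFin.
  have hp := normal_peak_gt0 b0.
  rewrite /normal_peak in h hp *.
  have c0 := @Cn_gt0 b b0; rewrite /Cn in c0 *.
  by apply: (mulfI (invr_neq0 (lt0r_neq0 c0))); rewrite h mulVf// lt0r_neq0.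
by rewrite gt0_muley ?lte_fin ?normal_peak_gt0.
Qed.

Lemma pt_ineq (m s t x : R) : 0 < s -> 0 < t ->
  (2 * t ^+ 2 * s ^+ 2 + t ^+ 2 * (1 - t ^+ 2) * m ^+ 2) * normal_fun m s x <=
  2 * t ^+ 2 * s ^+ 2 * normal_fun (t ^+ 2 * m) (t * s) x
   + (1 - t ^+ 2) * x ^+ 2 * normal_fun m s x.
Proof.
move=> s0 t0.
set y := (x - m) ^+ 2 / (s ^+ 2 *+ 2) - (x - t ^+ 2 * m) ^+ 2 / ((t * s) ^+ 2 *+ 2).
have hy : 2 * t ^+ 2 * s ^+ 2 * (1 + y) =
   2 * t ^+ 2 * s ^+ 2 - (1 - t ^+ 2) * x ^+ 2 + t ^+ 2 * (1 - t ^+ 2) * m ^+ 2.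
  rewrite /y; field.
  by rewrite !gt_eqF.
have he : normal_fun (t ^+ 2 * m) (t * s) x = normal_fun m s x * expR y.
  rewrite /normal_fun -expRD; congr expR; rewrite /y; ring.
rewrite he.
have hn := normal_fun_ge0 m s x.
have h1 := expR_ge1Dx y.
have hc : 0 <= 2 * t ^+ 2 * s ^+ 2 by apply/mulr_ge0; [apply/mulr_ge0|]; rewrite ?sqr_ge0.
have : 2 * t ^+ 2 * s ^+ 2 * (normal_fun m s x * (1 + y)) <=
       2 * t ^+ 2 * s ^+ 2 * (normal_fun m s x * expR y).
  by apply: ler_wpM2l => //; apply: ler_wpM2l.
move: hy; set c := 2 * t ^+ 2 * s ^+ 2; set n := normal_fun m s x.
move=> hy h.
have -> : (c + t ^+ 2 * (1 - t ^+ 2) * m ^+ 2) * n =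
   c * (n * (1 + y)) + (1 - t ^+ 2) * x ^+ 2 * n.
  have -> : c * (n * (1 + y)) = n * (c * (1 + y)) by rewrite mulrCA.
  rewrite hy; ring.
by rewrite lerD2r.
Qed.

Lemma mnf (a b : R) : measurable_fun setT (fun x : R => (normal_fun a b x)%:E).
Proof. by apply/measurable_EFinP; exact: measurable_normal_fun. Qed.

Lemma mx2nf (a b : R) : measurable_fun setT (fun x : R => (x ^+ 2 * normal_fun a b x)%:E).
Proof.
apply/measurable_EFinP; apply: measurable_funM; last exact: measurable_normal_fun.
exact: exprn_measurable.
Qed.

Lemma int_cnf (c a b : R) : 0 <= c -> b != 0 ->
  (\int[mu]_x ((c * normal_fun a b x)%:E) = (c * Cn b)%:E)%E.
Proof.
move=> c0 b0.
under eq_integral do rewrite EFinM.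
rewrite ge0_integralZl//=; last 2 first.
- exact: mnf.
- by move=> x _; rewrite lee_fin normal_fun_ge0.
by rewrite int_nf// -EFinM.
Qed.

Lemma moment_lb (m s : R) : 0 < s ->
  (((m ^+ 2 + s ^+ 2) * Cn s)%:E <= \int[mu]_x (x ^+ 2 * normal_fun m s x)%:E)%E.
Proof.
move=> s0.
have s0' : s != 0 by rewrite gt_eqF.
set X := (\int[mu]_x (x ^+ 2 * normal_fun m s x)%:E)%E.
have X0 : (0 <= X)%E.
  by apply: integral_ge0 => x _; rewrite lee_fin mulr_ge0 ?sqr_ge0 ?normal_fun_ge0.
have key t : 0 < t -> t < 1 ->
  (((2 * t ^+ 2 * s ^+ 2 + t ^+ 2 * (1 - t ^+ 2) * m ^+ 2) * Cn s)%:E <=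
   (2 * t ^+ 2 * s ^+ 2 * (t * Cn s))%:E + (1 - t ^+ 2)%:E * X)%E.
  move=> t0 t1.
  have t2 : 0 <= 1 - t ^+ 2 by nra.
  have c0 : 0 <= 2 * t ^+ 2 * s ^+ 2 by nra.
  have c1 : 0 <= 2 * t ^+ 2 * s ^+ 2 + t ^+ 2 * (1 - t ^+ 2) * m ^+ 2.
    by apply: addr_ge0 => //; apply: mulr_ge0; [apply: mulr_ge0|]; rewrite ?sqr_ge0.
  have ts0 : t * s != 0 by rewrite mulf_neq0 ?gt_eqF.
  rewrite -(int_cnf _ m)//.
  have -> : ((2 * t ^+ 2 * s ^+ 2 * (t * Cn s))%:E + (1 - t ^+ 2)%:E * X =
     \int[mu]_x ((2 * t ^+ 2 * s ^+ 2 * normal_fun (t ^+ 2 * m) (t * s) x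
        + (1 - t ^+ 2) * x ^+ 2 * normal_fun m s x)%:E))%E.
    under [in RHS]eq_integral do rewrite EFinD.
    rewrite ge0_integralD//=; last 4 first.
    - by move=> x _; rewrite lee_fin mulr_ge0 ?normal_fun_ge0.
    - by apply/measurable_EFinP; apply: measurable_funM => //; exact: measurable_normal_fun.
    - by move=> x _; rewrite lee_fin mulr_ge0 ?normal_fun_ge0// mulr_ge0// sqr_ge0.
    - apply/measurable_EFinP; apply: measurable_funM; last exact: measurable_normal_fun.
      by apply: measurable_funM => //; exact: exprn_measurable.
    rewrite int_cnf// CnM ?ltW//; apply: f_equal.
    under eq_integral do rewrite -mulrA EFinM.
    rewrite ge0_integralZl//=.
    - exact: mx2nf.
    - by move=> x _; rewrite lee_fin mulr_ge0 ?normal_fun_ge0// sqr_ge0.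
  apply: ge0_le_integral => //=.
  - by move=> x _; rewrite lee_fin mulr_ge0 ?normal_fun_ge0.
  - by apply/measurable_EFinP; apply: measurable_funM => //; exact: measurable_normal_fun.
  - apply/measurable_EFinP; apply: measurable_funD.
      by apply: measurable_funM => //; exact: measurable_normal_fun.
    apply: measurable_funM; last exact: measurable_normal_fun.
    by apply: measurable_funM => //; exact: exprn_measurable.
  - by move=> x _; rewrite lee_fin; exact: pt_ineq.
move: X0 key; case: X => [r| |]// r0 key.
  rewrite lee_fin.
  have C0 := @Cn_gt0 s s0'.
  set A := (m ^+ 2 + s ^+ 2) * Cn s.
  have A0 : 0 < A by rewrite /A mulr_gt0// ltr_pwDr ?exprn_even_gt0// sqr_ge0.
  have kt t : 0 < t -> t < 1 -> t ^+ 2 * A <= r.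
    move=> t0 t1; have := key t t0 t1; rewrite -EFinM -EFinD lee_fin => h.
    have h2 : 0 < 1 - t ^+ 2 by nra.
    rewrite -subr_ge0 -(pmulr_rge0 _ h2).
    rewrite /A; rewrite lee_fin in r0.
    have hs : 0 <= t ^+ 2 * s ^+ 2 * Cn s * (1 - t) ^+ 2.
      by apply: mulr_ge0; [apply: mulr_ge0; [apply: mulr_ge0|apply: ltW]|]; rewrite ?sqr_ge0.
    nra.
  rewrite leNgt; apply/negP => rA.
  have q0 : 0 <= r / A by rewrite divr_ge0 // ?ltW // -lee_fin.
  have q1 : r / A < 1 by rewrite ltr_pdivrMr// mul1r.
  have hA : r = (r / A) * A by rewrite divfK// gt_eqF.
  have h : ((1 + r / A) / 2) ^+ 2 * A <= r by apply: kt; lra.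
  rewrite {2}hA ler_pM2r// in h.
  move: (r / A) q0 q1 h => q q0 q1 h; nra.
by rewrite leey.
Qed.

Lemma diffG2 (sigma x : R) :
  diffG sigma x ^+ 2 = 15 * sigma ^+ 6 + 36 * sigma ^+ 4 * x ^+ 2 + 9 * sigma ^+ 2 * x ^+ 4.
Proof.
rewrite /diffG sqr_sqrtr//.
have h2 : 0 <= sigma ^+ 2 by rewrite sqr_ge0.
have -> : sigma ^+ 6 = (sigma ^+ 3) ^+ 2 by rewrite -exprM.
have -> : sigma ^+ 4 = (sigma ^+ 2) ^+ 2 by rewrite -exprM.
have -> : x ^+ 4 = (x ^+ 2) ^+ 2 by rewrite -exprM.
have := sqr_ge0 (sigma ^+ 3); have := sqr_ge0 (sigma ^+ 2); have := sqr_ge0 x.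
have := sqr_ge0 (x ^+ 2); nra.
Qed.

Lemma diffG_gt0 (sigma x : R) : 0 < sigma -> 0 < diffG sigma x.
Proof.
move=> s0; rewrite /diffG sqrtr_gt0.
have h6 : 0 < sigma ^+ 6 by rewrite exprn_gt0.
have x4 : 0 <= x ^+ 4 by rewrite (_ : 4 = 2 * 2)%N // exprM sqr_ge0.
have h4 : 0 <= sigma ^+ 4 * x ^+ 2.
  by apply: mulr_ge0; [exact: exprn_ge0 (ltW s0)| exact: sqr_ge0].
have h2 : 0 <= sigma ^+ 2 * x ^+ 4.
  by apply: mulr_ge0; [exact: exprn_ge0 (ltW s0)| exact: x4].
nra.
Qed.

Lemma transP_eq (sigma dt xi x : R) : 0 < sigma -> 0 < dt ->
  transP sigma dt xi x =
  (Cn (diffG sigma x * Num.sqrt dt))^-1 *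
    normal_fun (x + driftF sigma x * dt) (diffG sigma x * Num.sqrt dt) xi.
Proof.
move=> s0 dt0.
have G0 := @diffG_gt0 sigma x s0.
rewrite /transP /normal_fun /Cn; congr (_ * _).
  congr GRing.inv.
  have -> : (diffG sigma x * Num.sqrt dt) ^+ 2 * pi *+ 2 =
     diffG sigma x ^+ 2 * (2 * pi * dt).
    by rewrite exprMn [Num.sqrt dt ^+ 2]sqr_sqrtr ?ltW// -mulr_natr; ring.
  by rewrite (sqrtrM _ (sqr_ge0 (diffG sigma x))) sqrtr_sqr ger0_norm ?ltW.
congr expR; rewrite exprMn sqr_sqrtr ?ltW//.
have -> : xi - x - driftF sigma x * dt = xi - (x + driftF sigma x * dt) by ring.
congr (_ * GRing.inv _).
by rewrite sqr_sqrtr ?ltW// -mulr_natr; ring.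
by have := @diffG_gt0 sigma x s0; rewrite /diffG sqrtr_gt0.
Qed.

Lemma sigma_facts (sigma : R) : Num.sqrt 2 / 3 < sigma ->
  0 < sigma /\ 2 < 9 * sigma ^+ 2.
Proof.
move=> h.
have a0 : 0 <= Num.sqrt 2 :> R by exact: sqrtr_ge0.
have a2 : Num.sqrt 2 ^+ 2 = 2 :> R by rewrite sqr_sqrtr.
have s0 : 0 < sigma by apply: le_lt_trans h; rewrite divr_ge0.
split => //.
have h' : Num.sqrt 2 < 3 * sigma by rewrite -ltr_pdivrMl// mulrC.
nra.
Qed.

Lemma Q_lb (sigma dt x : R) : Num.sqrt 2 / 3 < sigma -> 0 < dt ->
  ((x ^+ 2 + 15 * sigma ^+ 6 * dt)%:E <=
    \int[mu]_xi (xi ^+ 2 * transP sigma dt xi x)%:E)%E.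
Proof.
move=> /sigma_facts [s0 s9] dt0.
have G0 := @diffG_gt0 sigma x s0.
set s := diffG sigma x * Num.sqrt dt.
have ss0 : 0 < s by rewrite mulr_gt0// sqrtr_gt0.
have C0 := @Cn_gt0 s (lt0r_neq0 ss0).
under eq_integral do rewrite transP_eq// mulrCA EFinM.
rewrite ge0_integralZl//=; last 3 first.
- exact: mx2nf.
- by move=> y _; rewrite lee_fin mulr_ge0 ?sqr_ge0 ?normal_fun_ge0.
- by rewrite lee_fin invr_ge0 ltW.
have hm := @moment_lb (x + driftF sigma x * dt) s ss0.
have hC : (0 <= ((Cn s)^-1)%:E)%E by rewrite lee_fin invr_ge0 ltW.
have h0 : (0 <= (((x + driftF sigma x * dt) ^+ 2 + s ^+ 2) * Cn s)%:E)%E.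
  by rewrite lee_fin; apply: mulr_ge0; [apply: addr_ge0; exact: sqr_ge0 | exact: ltW].
apply: le_trans (lee_pmul hC h0 (lexx _) hm).
rewrite -EFinM [X in (_ <= X%:E)%E]mulrCA mulVf ?gt_eqF// mulr1 lee_fin.
rewrite /s exprMn [Num.sqrt dt ^+ 2]sqr_sqrtr ?(ltW dt0)// diffG2 /driftF.
set F := - x ^+ 3 - 3 * sigma ^+ 2 * x.
have -> : (x + F * dt) ^+ 2 + (15 * sigma ^+ 6 + 36 * sigma ^+ 4 * x ^+ 2 +
   9 * sigma ^+ 2 * x ^+ 4) * dt = x ^+ 2 + 15 * sigma ^+ 6 * dt +
   (dt * ((9 * sigma ^+ 2 - 2) * (x ^+ 2) ^+ 2 +
     6 * sigma ^+ 2 * (6 * sigma ^+ 2 - 1) * x ^+ 2) + (F * dt) ^+ 2).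
  by rewrite /F; ring.
rewrite lerDl; apply: addr_ge0; last exact: sqr_ge0.
apply: mulr_ge0; first exact: ltW.
have h1 : 0 <= sigma ^+ 2 by exact: sqr_ge0.
have h2 : 0 <= x ^+ 2 by exact: sqr_ge0.
apply: addr_ge0; first by apply: mulr_ge0; [lra| exact: sqr_ge0].
apply: mulr_ge0 => //; apply: mulr_ge0; lra.
Qed.

Lemma inv_expln (y : R) : 0 < y -> y^-1 = expR (- ln y).
Proof. by move=> y0; rewrite expRN lnK. Qed.

Lemma mdiffG (sigma : R) : measurable_fun setT (diffG sigma).
Proof.
rewrite /diffG.
apply: (@measurableT_comp _ _ _ _ _ _ (@Num.sqrt R)).
  by apply: continuous_measurable_fun => y; exact: sqrt_continuous.
apply: measurable_funD; last first.
  by apply: measurable_funM => //; exact: exprn_measurable.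
apply: measurable_funD => //.
by apply: measurable_funM => //; exact: exprn_measurable.
Qed.

Lemma mdriftF (sigma : R) : measurable_fun setT (driftF sigma).
Proof.
rewrite /driftF; apply: measurable_funB.
  by apply: measurable_funN; exact: exprn_measurable.
exact: measurable_funM.
Qed.

Lemma mtransP d (T : measurableType d) (sigma dt : R) (u v : T -> R) :
  0 < sigma -> 0 < dt ->
  measurable_fun setT u -> measurable_fun setT v ->
  measurable_fun setT (fun z => transP sigma dt (u z) (v z)).
Proof.
move=> s0 dt0 mu_ mv.
have mG : measurable_fun setT (fun z => diffG sigma (v z)).
  exact: measurableT_comp (mdiffG sigma) mv.
have mF : measurable_fun setT (fun z => driftF sigma (v z)).
  exact: measurableT_comp (mdriftF sigma) mv.
have -> : (fun z => transP sigma dt (u z) (v z)) =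
  (fun z => expR (- ln (diffG sigma (v z) * Num.sqrt (2 * pi * dt))) *
   expR (- (u z - v z - driftF sigma (v z) * dt) ^+ 2 *
     expR (- ln (2 * diffG sigma (v z) ^+ 2 * dt)))).
  apply/funext => z; rewrite /transP.
  have G0 := @diffG_gt0 sigma (v z) s0.
  rewrite -!inv_expln//.
  - by rewrite mulr_gt0// mulr_gt0// exprn_gt0.
  - by rewrite mulr_gt0// sqrtr_gt0 mulr_gt0// mulr_gt0// pi_gt0.
apply: measurable_funM.
  apply: measurableT_comp; first exact: measurable_expR.
  apply: measurable_funN; apply: measurableT_comp; first exact: measurable_ln.
  exact: measurable_funM.
apply: measurableT_comp; first exact: measurable_expR.
apply: measurable_funM.
  apply: measurable_funN; apply: measurable_funX.
  apply: measurable_funB => //; first exact: measurable_funB.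
  exact: measurable_funM.
apply: measurableT_comp; first exact: measurable_expR.
apply: measurable_funN; apply: measurableT_comp; first exact: measurable_ln.
apply: measurable_funM => //; apply: measurable_funM => //.
exact: measurable_funX.
Qed.

Lemma transP_ge0 (sigma dt xi x : R) : 0 < sigma -> 0 < dt ->
  0 <= transP sigma dt xi x.
Proof.
move=> s0 dt0; rewrite transP_eq//.
apply: mulr_ge0; last exact: normal_fun_ge0.
by rewrite invr_ge0 /Cn sqrtr_ge0.
Qed.

End Aux.
Arguments Cn {R}.
Arguments CnM {R}.
Arguments Cn_gt0 {R}.
Arguments int_nf {R}.
Arguments pt_ineq {R}.
Arguments mnf {R}.
Arguments mx2nf {R}.
Arguments int_cnf {R}.
Arguments moment_lb {R}.
Arguments diffG2 {R}.
Arguments diffG_gt0 {R}.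
Arguments transP_eq {R}.
Arguments sigma_facts {R}.
Arguments Q_lb {R}.
Arguments inv_expln {R}.
Arguments mdiffG {R}.
Arguments mdriftF {R}.
Arguments mtransP {R}.
Arguments transP_ge0 {R}.

Theorem mainTheorem2 (R : realType) (sigma dt : R) :
  Num.sqrt 2 / 3 < sigma -> 0 < dt ->
  ~ (exists rho : R -> R,
       is_prob_density rho /\ is_equilibrium sigma dt rho /\
       finite_second_moment rho).
Proof.
move=> hs dt0 [rho [[mrho [rho0 int1]] [heq hfin]]].
have [s0 _] := sigma_facts sigma hs.
set K := 15 * sigma ^+ 6 * dt.
have K0 : 0 < K by rewrite /K mulr_gt0// mulr_gt0// exprn_gt0.
set M := (\int[lebesgue_measure]_x (x ^+ 2 * rho x)%:E)%E.
have M0 : (0 <= M)%E.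
  by apply: integral_ge0 => x _; rewrite lee_fin mulr_ge0 ?sqr_ge0.
pose f : R * R -> \bar R := fun p => (p.1 ^+ 2 * (transP sigma dt p.1 p.2 * rho p.2))%:E.
have mf : measurable_fun setT f.
  apply/measurable_EFinP; apply: measurable_funM.
    by apply: measurable_funX; exact: measurable_fst.
  apply: measurable_funM.
    by apply: mtransP.
  exact: measurableT_comp mrho measurable_snd.
have f0 p : (0 <= f p)%E.
  by rewrite lee_fin mulr_ge0 ?sqr_ge0// mulr_ge0// transP_ge0.
have E1 : M = (\int[lebesgue_measure]_xi \int[lebesgue_measure]_x f (xi, x))%E.
  apply: eq_integral => xi _.
  rewrite EFinM heq -ge0_integralZl//=; last 3 first.
  - apply/measurable_EFinP; apply: measurable_funM => //.
    by apply: mtransP => //; exact: measurable_cst.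
  - by move=> x _; rewrite lee_fin mulr_ge0// transP_ge0.
  - by rewrite lee_fin sqr_ge0.
rewrite (@fubini_tonelli _ _ _ _ _ lebesgue_measure lebesgue_measure f mf f0) in E1.
have E2 : (\int[lebesgue_measure]_x ((x ^+ 2 + K) * rho x)%:E <=
    \int[lebesgue_measure]_x \int[lebesgue_measure]_xi f (xi, x))%E.
  apply: ge0_le_integral => //=.
  - by move=> x _; rewrite lee_fin mulr_ge0// addr_ge0 ?sqr_ge0 ?ltW.
  - apply/measurable_EFinP; apply: measurable_funM => //.
    by apply: measurable_funD => //; exact: exprn_measurable.
  - exact: (@measurable_fun_fubini_tonelli_G _ _ _ _ _ lebesgue_measure f mf f0).
  move=> x _.
  rewrite /f /=.
  under eq_integral do rewrite mulrA EFinM.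
  rewrite ge0_integralZr//=; last 3 first.
  - apply/measurable_EFinP; apply: measurable_funM.
      exact: exprn_measurable.
    by apply: mtransP => //; exact: measurable_cst.
  - by move=> y _; rewrite lee_fin mulr_ge0 ?sqr_ge0// transP_ge0.
  - by rewrite lee_fin.
  rewrite EFinM; apply: lee_pmul => //.
  - by rewrite lee_fin addr_ge0 ?sqr_ge0 ?ltW.
  - by rewrite lee_fin.
  - exact: Q_lb.
have E3 : (\int[lebesgue_measure]_x ((x ^+ 2 + K) * rho x)%:E = M + K%:E)%E.
  under eq_integral do rewrite mulrDl EFinD.
  have mx2 : measurable_fun setT (fun x : R => (x ^+ 2 * rho x)%:E).
    by apply/measurable_EFinP; apply: measurable_funM => //; exact: exprn_measurable.
  have mK : measurable_fun setT (fun x : R => (K * rho x)%:E).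
    by apply/measurable_EFinP; apply: measurable_funM.
  rewrite ge0_integralD//=; try exact: mx2; try exact: mK; last 2 first.
    by move=> x _; have := rho0 x; rewrite lee_fin; nra.
    by move=> x _; have := rho0 x; have := sqr_ge0 x; rewrite lee_fin; nra.
  congr (_ + _)%E.
  under eq_integral do rewrite EFinM.
  rewrite ge0_integralZl//=; last 3 first.
  - exact/measurable_EFinP.
  - by move=> x _; rewrite lee_fin.
  - by rewrite lee_fin ltW.
  by rewrite int1 mule1.
rewrite E3 -E1 in E2.
clear E1 E3; move: M0 hfin E2; rewrite /finite_second_moment -/M.
case: M => [r| |]//= _ _.
rewrite -EFinD lee_fin; lra.
Qed.
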